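(* Consider the controlled SEIR system described in the context. Then: (1) For every $x_0=(S_0,E_0,I_0)\in\Pi$ and every $u\in\mathcal{U}$, the solution $x(\cdot;x_0,u)=(S,E,I)$ satisfies $\lim_{t\to\infty}E(t)=\lim_{t\to\infty}I(t)=0$ and $\lim_{t\to\infty}(S(t)+R(t))=1$, where $R(t):=1-S(t)-E(t)-I(t)$. (2) For every $x_0\in\mathcal{A}$ there exists $u\in\mathcal{U}$ such that $\lim_{t\to\infty}E(t)=\lim_{t\to\infty}I(t)=0$ and $I(t)\le I_{\max}$ for all $t\ge 0$. (3) For every $x_0\in\mathcal{M}$ and every $u\in\mathcal{U}$, $\lim_{t\to\infty}E(t)=\lim_{t\to\infty}I(t)=0$ and $I(t)\le I_{\max}$ for all $t\ge 0$.
   Context: Fix parameters $\eta>0$, $0<\beta_{\min}\le\beta_{\mathrm{nom}}$, $0<\gamma_{\mathrm{nom}}\le\gamma_{\max}<\infty$ and $I_{\max}\in(0,1)$. Let $U:=[\beta_{\min},\beta_{\mathrm{nom}}]\times[\gamma_{\mathrm{nom}},\gamma_{\max}]$ and let $\mathcal{U}$ be the set of measurable, locally integrable functions $u=(\beta,\gamma):[0,\infty)\to U$. Let $\Pi:=\{(S,E,I)\in[0,1]^3: S+E+I\le 1\}$. For $x_0=(S_0,E_0,I_0)\in\Pi$ and $u\in\mathcal{U}$, $x(\cdot;x_0,u)=(S,E,I)$ denotes the unique (absolutely continuous) solution of $\dot S=-\beta(t)SI$, $\dot E=\beta(t)SI-\eta E$, $\dot I=\eta E-\gamma(t)I$ with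 $x(0)=x_0$; it stays in $\Pi$. The removed compartment is $R(t)=1-S(t)-E(t)-I(t)$, which satisfies $\dot R=\gamma(t)I$. Let $G_\Pi:=\{(S,E,I)\in\Pi: I\le I_{\max}\}$. The admissible set is $\mathcal{A}:=\{x_0\in G_\Pi:\exists u\in\mathcal{U}\text{ with } x(t;x_0,u)\in G_\Pi\ \forall t\ge 0\}$, and the maximal robust positively invariant set is $\mathcal{M}:=\{x_0\in G_\Pi: x(t;x_0,u)\in G_\Pi\ \forall t\ge0,\ \forall u\in\mathcal{U}\}$. *)

(* Defs.v *)
From HB Require Import structures.
From mathcomp Require Import all_boot all_order all_algebra.
From mathcomp Require Import all_classical all_reals all_analysis.
Set Implicit Arguments. Unset Strict Implicit. Unset Printing Implicit Defensive.
Import Order.TTheory GRing.Theory Num.Theory.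
Import numFieldNormedType.Exports.
Local Open Scope classical_set_scope.
Local Open Scope ring_scope.

Section SEIR.
Variable R : realType.
Local Notation mu := (@lebesgue_measure R).

Definition inPi (S E I : R) : Prop :=
  [/\ 0 <= S <= 1, 0 <= E <= 1, 0 <= I <= 1 & S + E + I <= 1].

Definition inGPi (Imax S E I : R) : Prop := inPi S E I /\ I <= Imax.

Definition admissible_control (bmin bnom gnom gmax : R) (beta gamma : R -> R)
  : Prop :=
  [/\ measurable_fun (`[0%R, +oo[ : set R) beta,
      measurable_fun (`[0%R, +oo[ : set R) gamma,
      (forall T, 0 <= T ->
         mu.-integrable (`[0%R, T] : set R) (EFin \o beta) /\
         mu.-integrable (`[0%R, T] : set R) (EFin \o gamma)) &
      (forall t, 0 <= t -> bmin <= beta t <= bnom /\ gnom <= gamma t <= gmax)].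

(* (S,E,I) is an absolutely continuous (Caratheodory) solution on [0,+oo)
   of the controlled SEIR system with initial state (S0,E0,I0), written
   in the equivalent integral form: the right-hand sides are integrable on
   every [0,t] and each state equals its initial value plus the integral
   of its right-hand side. *)
Definition seir_solution (eta : R) (beta gamma : R -> R) (S0 E0 I0 : R)
  (S E I : R -> R) : Prop :=
  forall t, 0 <= t ->
    let fS := fun s => - (beta s * S s * I s) in
    let fE := fun s => beta s * S s * I s - eta * E s in
    let fI := fun s => eta * E s - gamma s * I s in
    [/\ mu.-integrable (`[0%R, t] : set R) (EFin \o fS),
        mu.-integrable (`[0%R, t] : set R) (EFin \o fE) &
        mu.-integrable (`[0%R, t] : set R) (EFin \o fI)] /\
    [/\ S t = S0 + Rintegral mu (`[0%R, t] : set R) fS,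
        E t = E0 + Rintegral mu (`[0%R, t] : set R) fE &
        I t = I0 + Rintegral mu (`[0%R, t] : set R) fI].

Definition in_A (eta bmin bnom gnom gmax Imax : R) (S0 E0 I0 : R) : Prop :=
  inGPi Imax S0 E0 I0 /\
  exists beta gamma, admissible_control bmin bnom gnom gmax beta gamma /\
    forall S E I, seir_solution eta beta gamma S0 E0 I0 S E I ->
      forall t, 0 <= t -> inGPi Imax (S t) (E t) (I t).

Definition in_M (eta bmin bnom gnom gmax Imax : R) (S0 E0 I0 : R) : Prop :=
  inGPi Imax S0 E0 I0 /\
  forall beta gamma, admissible_control bmin bnom gnom gmax beta gamma ->
    forall S E I, seir_solution eta beta gamma S0 E0 I0 S E I ->
      forall t, 0 <= t -> inGPi Imax (S t) (E t) (I t).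

End SEIR.

(* Main.v *)
Require Import Defs.
From HB Require Import structures.
From mathcomp Require Import all_boot all_order all_algebra.
From mathcomp Require Import all_classical all_reals all_analysis.
From mathcomp Require Import ring lra.
Import Order.TTheory GRing.Theory Num.Theory.
Import numFieldNormedType.Exports.
Local Open Scope classical_set_scope.
Local Open Scope ring_scope.

Set Implicit Arguments. Unset Strict Implicit.

Section H.
Variable R : realType.
Local Notation mu := (@lebesgue_measure R).

Lemma cst_int (s t c : R) : mu.-integrable `]s, t] (EFin \o cst c).
Proof.
apply: (@integrableS _ _ _ mu (`[s, t] : set R) `]s,t] (EFin \o cst c)) => //.
  by apply: subset_itvr; rewrite bnd_simp.
apply: continuous_compact_integrable; first exact: segment_compact.
by apply: continuous_subspaceT => x; exact: cst_continuous.
Qed.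

Lemma mu_oc (s t : R) : s <= t -> fine (mu `]s, t]) = t - s.
Proof.
rewrite le_eqVlt => /predU1P[->|st].
  by rewrite set_itv_ge ?bnd_simp// measure0 subrr.
by rewrite lebesgue_measure_itv /= lte_fin st /=.
Qed.

Lemma Rint_lb (s t c : R) (g : R -> R) : s <= t ->
  mu.-integrable `]s, t] (EFin \o g) ->
  (forall u, s < u -> u <= t -> c <= g u) ->
  c * (t - s) <= Rintegral mu `]s, t] g.
Proof.
move=> st ig hg.
rewrite -(@mu_oc s t st) -Rintegral_cst//.
apply: le_Rintegral => //; first exact: cst_int.
by move=> x /=; rewrite in_itv /= => /andP[]; exact: hg.
Qed.

Lemma Rint_ub (s t c : R) (g : R -> R) : s <= t ->
  mu.-integrable `]s, t] (EFin \o g) ->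
  (forall u, s < u -> u <= t -> g u <= c) ->
  Rintegral mu `]s, t] g <= c * (t - s).
Proof.
move=> st ig hg.
rewrite -(@mu_oc s t st) -Rintegral_cst//.
apply: le_Rintegral => //; first exact: cst_int.
by move=> x /=; rewrite in_itv /= => /andP[]; exact: hg.
Qed.

Lemma Rint_diff (F : R -> R) (g : R -> R) (F0 s t : R) :
  0 <= s -> s <= t ->
  mu.-integrable `[0, t] (EFin \o g) ->
  F t = F0 + Rintegral mu `[0, t] g ->
  F s = F0 + Rintegral mu `[0, s] g ->
  F t - F s = Rintegral mu `]s, t] g /\ mu.-integrable `]s, t] (EFin \o g).
Proof.
move=> s0 st ig Ft Fs; split; last first.
  apply: integrableS ig => //; apply: subset_itvr; by rewrite bnd_simp.
rewrite Ft Fs opprD addrACA subrr add0r.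
have := @Rintegral_itvB R g (BLeft 0) (BRight t) s ig.
by rewrite !bnd_simp => ->.
Qed.


Lemma bound_gen (F g : R -> R) (F0 T u : R) :
  (forall t, 0 <= t -> mu.-integrable `[0, t] (EFin \o g) /\
                       F t = F0 + Rintegral mu `[0, t] g) ->
  0 <= u -> u <= T ->
  `|F u| <= `|F0| + Rintegral mu `[0, T] (fun x => `|g x|).
Proof.
move=> h u0 uT.
have [iu Fu] := h u u0.
have [iT _] := h T (le_trans u0 uT).
rewrite Fu (le_trans (ler_normD _ _))// lerD2l.
apply: (le_trans (le_normr_Rintegral _ _)) => //.
have inT := integrable_norm iT.
have := @Rintegral_itvB R (fun x => `|g x|) (BLeft 0) (BRight T) u inT.
rewrite !bnd_simp => /(_ u0 uT) e.
rewrite -subr_ge0 e; apply: Rintegral_ge0 => x _; exact: normr_ge0.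
Qed.

Lemma lip_gen (F g : R -> R) (F0 C s t : R) :
  (forall t, 0 <= t -> mu.-integrable `[0, t] (EFin \o g) /\
                       F t = F0 + Rintegral mu `[0, t] g) ->
  0 <= s -> s <= t ->
  (forall u, s < u -> u <= t -> `|g u| <= C) ->
  `|F t - F s| <= C * (t - s).
Proof.
move=> h s0 st hg.
have [it Ft] := h t (le_trans s0 st).
have [iS Fs] := h s s0.
have [-> ig] := Rint_diff s0 st it Ft Fs.
rewrite ler_norml; apply/andP; split.
  rewrite -mulNr; apply: Rint_lb => // u su ut.
  by have := hg u su ut; rewrite ler_norml => /andP[].
apply: Rint_ub => // u su ut.
by have := hg u su ut; rewrite ler_norml => /andP[].
Qed.

Lemma last_time (F g : R -> R) (a t L c : R) :
  a <= t -> 0 <= c -> 0 <= L ->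
  (forall s, a <= s -> s <= t ->
     F t - F s = Rintegral mu `]s, t] g /\ mu.-integrable `]s, t] (EFin \o g)) ->
  (forall u w, a <= u -> u <= w -> w <= t -> `|F w - F u| <= L * (w - u)) ->
  0 <= F a ->
  (forall u, a < u -> u <= t -> F u < 0 -> - c <= g u) ->
  - c * (t - a) <= F t.
Proof.
move=> at0 c0 L0 hd hl Fa hg.
have [Ft0|Ftn] := leP 0 (F t).
  apply: le_trans Ft0; rewrite mulNr oppr_le0; apply: mulr_ge0 => //.
  by rewrite subr_ge0.
pose A := [set u | a <= u /\ u <= t /\ 0 <= F u].
have Aa : A a by split => //; split.
have hsA : has_sup A.
  split; first by exists a.
  by exists t => u [_ []].
pose s := sup A.
have as0 : a <= s by apply: sup_upper_bound.
have st : s <= t by apply: ge_sup; [exists a | move=> u [_ []]].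
have Fs : 0 <= F s.
  apply/ler_addgt0Pr => e e0.
  have e1 : 0 < e / (L + 1) by rewrite divr_gt0// ltr_pwDr.
  have [u [au [ut Fu]] hu] := sup_adherent e1 hsA.
  have us : u <= s by apply: sup_upper_bound.
  have := hl u s au us st; rewrite ler_norml => /andP[h1 _].
  have h2 : L * (s - u) <= e.
    have h3 : s - u <= e / (L + 1) by rewrite lerBlDr addrC -lerBlDr ltW.
    apply: (le_trans (ler_wpM2l L0 h3)).
    rewrite mulrA ler_pdivrMr ?ltr_pwDr//.
    rewrite mulrC; apply: ler_wpM2l; [exact: ltW|lra].
  have : - (L * (s - u)) <= F s - F u by [].
  lra.
have [e ig] := hd s as0 st.
have : - c * (t - s) <= Rintegral mu `]s, t] g.
  apply: Rint_lb => // u su ut; apply: hg => //.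
    exact: le_lt_trans su.
  rewrite ltNge; apply/negP => Fu.
  have : u <= s.
    apply: sup_upper_bound => //; split; first exact: (le_trans as0 (ltW su)).
    by split.
  by rewrite leNgt su.
rewrite -e => h.
have : - c * (t - a) <= - c * (t - s).
  rewrite !mulNr lerN2; apply: ler_wpM2l => //; lra.
lra.
Qed.


Lemma barbalat (f F : R -> R) (L k : R) : 0 < L -> 0 < k ->
  (forall t, 0 <= t -> 0 <= F t) ->
  (forall t, 0 <= t -> 0 <= f t) ->
  (forall s t, 0 <= s -> s <= t -> `|f t - f s| <= L * (t - s)) ->
  (forall s t m, 0 <= s -> s <= t -> 0 <= m ->
     (forall u, s < u -> u <= t -> m <= f u) -> k * m * (t - s) <= F s - F t) ->
  f t @[t --> +oo] --> 0.
Proof.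
move=> L0 k0 F0 f0 lip hF.
have Fmono : forall s t, 0 <= s -> s <= t -> F t <= F s.
  move=> s t s0 st; have := hF s t 0 s0 st (lexx _).
  have h : forall u, s < u -> u <= t -> 0 <= f u.
    by move=> u su _; apply: f0; exact: (le_trans s0 (ltW su)).
  move/(_ h); rewrite mulr0 mul0r subr_ge0 //.
pose G := [set x | exists t, 0 <= t /\ x = - F t].
have hsG : has_sup G.
  split; first by exists (- F 0); exists 0.
  exists 0 => x [t [t0 ->]]; rewrite oppr_le0; exact: F0.
apply/cvgrPdist_lt => e e0.
pose h := e / (2 * L).
have h0 : 0 < h by rewrite divr_gt0// mulr_gt0.
pose D := k * (e / 2) * h.
have D0 : 0 < D by rewrite mulr_gt0// mulr_gt0// divr_gt0.
have [x [T0 [T00 ->]] hx] := sup_adherent D0 hsG.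
exists T0; split; first exact: num_real.
move=> t Tt; rewrite sub0r normrN.
have t0 : 0 <= t by exact: (le_trans T00 (ltW Tt)).
rewrite ger0_norm ?f0//.
rewrite ltNge; apply/negP => fte.
have th : t <= t + h by rewrite lerDl ltW.
have key := hF t (t + h) (e / 2) t0 th.
have e2 : 0 <= e / 2 by rewrite divr_ge0// ltW.
have : k * (e / 2) * (t + h - t) <= F t - F (t + h).
  apply: key => // u tu uth.
  have u0 : 0 <= u by exact: (le_trans t0 (ltW tu)).
  have := lip t u t0 (ltW tu). move=> ll. rewrite ler_norml in ll; move/andP: ll => [l1 _].
  have : L * (u - t) <= L * h by apply: ler_wpM2l; [exact: ltW|lra].
  have : L * h = e / 2.
    by rewrite /h; field; exact: lt0r_neq0.
  lra.
have FT : F t <= F T0 by apply: Fmono => //; exact: ltW.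
have Fth : - F (t + h) <= sup G.
  apply: sup_upper_bound => //; exists (t + h); split => //.
  exact: (le_trans t0 th).
have -> : t + h - t = h by ring.
rewrite -/D.
lra.
Qed.


Lemma last_time2 (F g : R -> R) (F0 T C a t c : R) :
  (forall t, 0 <= t -> mu.-integrable `[0, t] (EFin \o g) /\
                       F t = F0 + Rintegral mu `[0, t] g) ->
  (forall v, 0 <= v -> v <= T -> `|g v| <= C) ->
  0 <= a -> a <= t -> t <= T -> 0 <= c -> 0 <= C -> 0 <= F a ->
  (forall u, a < u -> u <= t -> F u < 0 -> - c <= g u) ->
  - c * (t - a) <= F t.
Proof.
move=> sol gC a0 at0 tT c0 C0 Fa hg.
apply: (@last_time F g a t C c) => //.
- move=> s as0 st.
  have s0 : 0 <= s by exact: le_trans as0.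
  have [it Ft] := sol t (le_trans s0 st).
  have [iS Fs] := sol s s0.
  exact: (Rint_diff s0 st it Ft Fs).
- move=> u w au uw wt.
  apply: (lip_gen sol) => //; first exact: le_trans au.
  move=> v uv vw; apply: gC.
    by apply: (le_trans a0); apply: (le_trans au); exact: ltW.
  exact: (le_trans vw (le_trans wt tT)).
Qed.

Lemma intD_oc (f g : R -> R) (s t : R) :
  mu.-integrable `]s, t] (EFin \o f) -> mu.-integrable `]s, t] (EFin \o g) ->
  mu.-integrable `]s, t] (EFin \o (fun x => f x + g x)) /\
  Rintegral mu `]s, t] (fun x => f x + g x) =
    Rintegral mu `]s, t] f + Rintegral mu `]s, t] g.
Proof.
move=> i1 i2; split; last exact: RintegralD.
exact: (integrableD _ i1 i2).
Qed.

Lemma prod3 (x y z X Y Z : R) : `|x| <= X -> `|y| <= Y -> `|z| <= Z ->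
  `|x * y * z| <= X * Y * Z.
Proof.
move=> hx hy hz; rewrite !normrM.
apply: ler_pM; rewrite ?normrM ?normr_ge0 ?mulr_ge0 ?normr_ge0 //.
apply: ler_pM => //.
Qed.


Lemma lerNnormr (x : R) : - x <= `|x|.
Proof. by rewrite -normrN ler_norm. Qed.

Lemma ineqS (b x y B' m bn : R) : 0 <= b -> b <= bn -> x < 0 -> -x <= B' ->
  -y <= m -> 0 <= m -> -(bn * B' * m) <= -(b * x * y).
Proof.
move=> b0 bb x0 xB ym m0.
have [y0|y0] := leP 0 y.
  have h1 : b * x * y <= 0.
    apply: mulr_le0_ge0 => //; apply: mulr_ge0_le0 => //; exact: ltW.
  have h2 : 0 <= bn * B' * m by rewrite !mulr_ge0 //; lra.
  lra.
have -> : b * x * y = b * (- x) * (- y) by ring.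
rewrite lerN2; apply: ler_pM; try lra.
  rewrite mulr_ge0 //; lra.
apply: ler_pM; lra.
Qed.
Lemma ineqE (b x y B' m bn : R) : 0 <= b -> b <= bn -> x <= B' -> y <= B' ->
  -y <= m -> -x <= m -> 0 <= m -> 0 <= B' -> -(bn * B' * m) <= b * x * y.
Proof.
move=> b0 bb xB yB ym xm m0 B0.
have [x0|x0] := leP 0 x; have [y0|y0] := leP 0 y.
- have : 0 <= b * x * y by rewrite !mulr_ge0.
  have : 0 <= bn * B' * m by rewrite !mulr_ge0 //; lra.
  lra.
- have -> : b * x * y = - (b * x * (- y)) by ring.
  rewrite lerN2; apply: ler_pM; rewrite ?mulr_ge0 //; try lra.
  apply: ler_pM => //.
- have -> : b * x * y = - (b * (- x) * y) by ring.
  have -> : bn * B' * m = bn * m * B' by ring.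
  rewrite lerN2; apply: ler_pM; rewrite ?mulr_ge0 //; try lra.
  apply: ler_pM => //; lra.
- have : 0 <= b * x * y.
    have -> : b * x * y = b * (- x) * (- y) by ring.
    rewrite !mulr_ge0 //; lra.
  have : 0 <= bn * B' * m by rewrite !mulr_ge0 //; lra.
  lra.
Qed.

Section Main.
Variables (eta bmin bnom gnom gmax : R) (beta gamma : R -> R).
Variables (S0 E0 I0 : R) (S E I : R -> R).
Hypotheses (eta0 : 0 < eta) (bmin0 : 0 < bmin) (bminnom : bmin <= bnom)
  (gnom0 : 0 < gnom) (gnommax : gnom <= gmax).
Hypothesis hbg : forall t, 0 <= t -> bmin <= beta t <= bnom /\ gnom <= gamma t <= gmax.
Hypothesis hPi : inPi S0 E0 I0.
Ltac lrah := move: (eta0) (bmin0) (bminnom) (gnom0) (gnommax); lra.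
Hypothesis sol : seir_solution eta beta gamma S0 E0 I0 S E I.

Let fS := fun s => - (beta s * S s * I s).
Let fE := fun s => beta s * S s * I s - eta * E s.
Let fI := fun s => eta * E s - gamma s * I s.

Let solS : forall t, 0 <= t -> mu.-integrable `[0, t] (EFin \o fS) /\
                       S t = S0 + Rintegral mu `[0, t] fS.
Proof. by move=> t t0; have [[? ? ?] [? ? ?]] := sol t0. Qed.
Let solE : forall t, 0 <= t -> mu.-integrable `[0, t] (EFin \o fE) /\
                       E t = E0 + Rintegral mu `[0, t] fE.
Proof. by move=> t t0; have [[? ? ?] [? ? ?]] := sol t0. Qed.
Let solI : forall t, 0 <= t -> mu.-integrable `[0, t] (EFin \o fI) /\
                       I t = I0 + Rintegral mu `[0, t] fI.
Proof. by move=> t t0; have [[? ? ?] [? ? ?]] := sol t0. Qed.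

Let at0 (F g : R -> R) F0 :
  (forall t, 0 <= t -> mu.-integrable `[0, t] (EFin \o g) /\
                       F t = F0 + Rintegral mu `[0, t] g) -> F 0 = F0.
Proof.
move=> h; have [_ ->] := h 0 (lexx _).
by rewrite set_itv1 Rintegral_set1 addr0.
Qed.

Let S00 : S 0 = S0. Proof. exact: (at0 solS). Qed.
Let E00 : E 0 = E0. Proof. exact: (at0 solE). Qed.
Let I00 : I 0 = I0. Proof. exact: (at0 solI). Qed.

Definition nonneg_upto x := forall v, 0 <= v -> v <= x -> 0 <= S v /\ 0 <= E v /\ 0 <= I v.

Section Pos.
Variable T : R.
Hypothesis T0 : 0 <= T.
Let BS := `|S0| + Rintegral mu `[0, T] (fun x => `|fS x|).
Let BE := `|E0| + Rintegral mu `[0, T] (fun x => `|fE x|).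
Let BI := `|I0| + Rintegral mu `[0, T] (fun x => `|fI x|).
Let B := BS + BE + BI.
Let BS0 : 0 <= BS. Proof. by apply: addr_ge0 => //; apply: Rintegral_ge0 => x _. Qed.
Let BE0 : 0 <= BE. Proof. by apply: addr_ge0 => //; apply: Rintegral_ge0 => x _. Qed.
Let BI0 : 0 <= BI. Proof. by apply: addr_ge0 => //; apply: Rintegral_ge0 => x _. Qed.
Let B0 : 0 <= B. Proof. have := BS0; have := BE0; have := BI0; rewrite /B; lra. Qed.
Let bdS v : 0 <= v -> v <= T -> `|S v| <= B.
Proof. move=> v0 vT; have := bound_gen solS v0 vT; rewrite -/BS /B; have := BE0; have := BI0; lra. Qed.
Let bdE v : 0 <= v -> v <= T -> `|E v| <= B.
Proof. move=> v0 vT; have := bound_gen solE v0 vT; rewrite -/BE /B; have := BS0; have := BI0; lra. Qed.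
Let bdI v : 0 <= v -> v <= T -> `|I v| <= B.
Proof. move=> v0 vT; have := bound_gen solI v0 vT; rewrite -/BI /B; have := BE0; have := BS0; lra. Qed.
Let C := bnom * B * B + (eta + gmax) * B.
Let C0 : 0 <= C.
Proof.
have b0 := B0; have bn : 0 <= bnom by lrah.
have eg : 0 <= eta + gmax by lrah.
by rewrite /C addr_ge0 // !mulr_ge0.
Qed.
Let bb v : 0 <= v -> `|beta v| <= bnom.
Proof. move=> v0; have [/andP[h1 h2] _] := hbg v0; rewrite ger0_norm //; lrah. Qed.
Let bg v : 0 <= v -> `|gamma v| <= gmax.
Proof. move=> v0; have [_ /andP[h1 h2]] := hbg v0; rewrite ger0_norm //; lrah. Qed.
Let bfS v : 0 <= v -> v <= T -> `|fS v| <= C.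
Proof.
move=> v0 vT; rewrite /fS normrN.
have := prod3 (bb v0) (bdS v0 vT) (bdI v0 vT).
have : 0 <= (eta + gmax) * B by apply: mulr_ge0; [lrah|exact: B0].
rewrite /C; lra.
Qed.
Let bfE v : 0 <= v -> v <= T -> `|fE v| <= C.
Proof.
move=> v0 vT; rewrite /fE.
apply: (le_trans (ler_normB _ _)).
have := prod3 (bb v0) (bdS v0 vT) (bdI v0 vT).
have : `|eta * E v| <= eta * B.
  by rewrite normrM gtr0_norm // ler_wpM2l ?bdE // ltW.
have : 0 <= gmax * B by apply: mulr_ge0; [lrah|exact: B0].
rewrite /C; lra.
Qed.
Let bfI v : 0 <= v -> v <= T -> `|fI v| <= C.
Proof.
move=> v0 vT; rewrite /fI.
apply: (le_trans (ler_normB _ _)).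
have : `|eta * E v| <= eta * B.
  by rewrite normrM gtr0_norm // ler_wpM2l ?bdE // ltW.
have : `|gamma v * I v| <= gmax * B.
  rewrite normrM; apply: ler_pM => //; [exact: bg | exact: bdI].
have : 0 <= bnom * B * B by have := B0; rewrite !mulr_ge0 //; lrah.
rewrite /C; lra.
Qed.

Let K := bnom * B + eta + 1.
Let K0 : 0 < K.
Proof. have := B0; rewrite /K => b0; have : 0 <= bnom * B by rewrite mulr_ge0 //; lrah. lrah. Qed.
Let dl := (2 * K)^-1.
Let dl0 : 0 < dl. Proof. by rewrite /dl invr_gt0 mulr_gt0 //; exact: K0. Qed.
Let small (c x m : R) : 0 <= c -> c <= K * m -> 0 <= x -> x <= dl -> c * x <= m / 2.
Proof.
move=> c0 cK x0 xd.
apply: (le_trans (ler_pM c0 x0 cK xd)).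
have k0 := K0.
have -> : K * m * dl = m / 2 by rewrite /dl; field; exact: lt0r_neq0.
by [].
Qed.

Let step a b : 0 <= a -> a <= b -> b <= T -> b - a <= dl ->
  nonneg_upto a -> nonneg_upto b.
Proof.
move=> a0 ab bT bd Pa.
pose V := [set x : R | x = 0 \/ exists v, [/\ a <= v, v <= b &
   (x = - S v \/ x = - E v \/ x = - I v)]].
have hsV : has_sup V.
  split; first by exists 0; left.
  exists B => x [->|[v [av vb h]]]; first exact: B0.
  have v0 : 0 <= v by exact: le_trans av.
  have vT : v <= T by exact: le_trans bT.
  case: h => [->|[->|->]]; apply: (le_trans (lerNnormr _)).
  - exact: bdS. - exact: bdE. - exact: bdI.
pose m := sup V.
have m0 : 0 <= m by apply: sup_upper_bound => //; left.
have mS v : a <= v -> v <= b -> - S v <= m.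
  by move=> av vb; apply: sup_upper_bound => //; right; exists v; split => //; left.
have mE v : a <= v -> v <= b -> - E v <= m.
  by move=> av vb; apply: sup_upper_bound => //; right; exists v; split => //; right; left.
have mI v : a <= v -> v <= b -> - I v <= m.
  by move=> av vb; apply: sup_upper_bound => //; right; exists v; split => //; right; right.
have [PaS [PaE PaI]] := Pa a a0 (lexx _).
have cK : bnom * B * m <= K * m.
  by apply: ler_wpM2r => //; rewrite /K; lrah.
have cK' : eta * m <= K * m.
  apply: ler_wpM2r => //; rewrite /K; have := B0 => b0.
  have : 0 <= bnom * B by rewrite mulr_ge0 //; lrah.
  lrah.
have c0 : 0 <= bnom * B * m by apply: mulr_ge0 => //; apply: mulr_ge0; [lrah|exact: B0].
have c0' : 0 <= eta * m by apply: mulr_ge0 => //; lrah.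
have bnd t : a <= t -> t <= b -> [/\ - S t <= m / 2, - E t <= m / 2 & - I t <= m / 2].
  move=> at1 tb.
  have tT : t <= T by exact: le_trans bT.
  have ta0 : 0 <= t - a by rewrite subr_ge0.
  have tad : t - a <= dl by lra.
  have hu u : a < u -> u <= t -> [/\ 0 <= u, u <= T, a <= u & u <= b].
    move=> au ut; split; [lra|lra|lra|lra].
  split.
  - have := @last_time2 S fS S0 T C a t (bnom * B * m) solS bfS a0 at1 tT c0 C0 PaS.
    have := small c0 cK ta0 tad.
    suff h : forall u, a < u -> u <= t -> S u < 0 -> - (bnom * B * m) <= fS u.
      by move=> h1 /(_ h) h2; lra.
    move=> u au ut Su; have [u0 uT au' ub] := hu u au ut.
    have [/andP[b1 b2] _] := hbg u0.
    apply: ineqS => //; first lrah.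
    + by apply: (le_trans (lerNnormr _)); exact: bdS.
    + exact: mI.
  - have := @last_time2 E fE E0 T C a t (bnom * B * m) solE bfE a0 at1 tT c0 C0 PaE.
    have := small c0 cK ta0 tad.
    suff h : forall u, a < u -> u <= t -> E u < 0 -> - (bnom * B * m) <= fE u.
      by move=> h1 /(_ h) h2; lra.
    move=> u au ut Eu; have [u0 uT au' ub] := hu u au ut.
    have [/andP[b1 b2] _] := hbg u0.
    have : - (bnom * B * m) <= beta u * S u * I u.
      apply: ineqE.
      + lrah.
      + lrah.
      + by apply: (le_trans (ler_norm _)); exact: bdS.
      + by apply: (le_trans (ler_norm _)); exact: bdI.
      + exact: mI.
      + exact: mS.
      + exact: m0.
      + exact: B0.
    have : 0 <= - (eta * E u) by rewrite -mulrN mulr_ge0 //; lrah.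
    rewrite /fE; lra.
  - have := @last_time2 I fI I0 T C a t (eta * m) solI bfI a0 at1 tT c0' C0 PaI.
    have := small c0' cK' ta0 tad.
    suff h : forall u, a < u -> u <= t -> I u < 0 -> - (eta * m) <= fI u.
      by move=> h1 /(_ h) h2; lra.
    move=> u au ut Iu; have [u0 uT au' ub] := hu u au ut.
    have [_ /andP[g1 g2]] := hbg u0.
    have : 0 <= - (gamma u * I u) by rewrite -mulrN mulr_ge0 //; lrah.
    have : - (eta * m) <= eta * E u.
      rewrite -mulrN; apply: ler_wpM2l; [lrah| ].
      have := mE u au' ub; lra.
    rewrite /fI; lra.
have mm : m <= m / 2.
  apply: ge_sup; first by exists 0; left.
  move=> x [->|[v [av vb h]]]; first lra.
  have [h1 h2 h3] := bnd v av vb.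
  by case: h => [->|[->|->]].
have mz : m <= 0 by lra.
move=> v v0 vb.
have [va|av] := leP v a; first exact: Pa.
have [h1 h2 h3] := bnd v (ltW av) vb.
split; [lra|split; lra].
Qed.

Lemma posT : nonneg_upto T.
Proof.
have Q n : forall v, 0 <= v -> v <= T -> v <= n%:R * dl ->
    0 <= S v /\ 0 <= E v /\ 0 <= I v.
  elim: n => [|n IH] v v0 vT vn.
  - move: vn; rewrite mul0r => vn.
    have -> : v = 0 by lra.
    rewrite S00 E00 I00.
    by case: hPi => /andP[? _] /andP[? _] /andP[? _] _.
  - have [vn'|vn'] := leP v (n%:R * dl); first exact: IH.
    have nd0 : 0 <= n%:R * dl by rewrite mulr_ge0 // ltW // dl0.
    apply: (@step (n%:R * dl) v) => //; first exact: ltW.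
    + move: vn; rewrite -addn1 natrD mulrDl mul1r; lra.
    + move=> w w0 wn; apply: IH => //.
      by apply: (le_trans wn); apply: (le_trans (ltW vn')).
move=> v v0 vT.
have hT : 0 <= T / dl by rewrite divr_ge0 // ltW // dl0.
have := archi_boundP hT.
set N := Num.Def.archi_bound _ => hN.
apply: (Q N) => //.
apply: (le_trans vT).
have := dl0 => d0.
rewrite -ler_pdivrMr //; exact: ltW.
Qed.

End Pos.

Lemma pos_all v : 0 <= v -> 0 <= S v /\ 0 <= E v /\ 0 <= I v.
Proof. by move=> v0; apply: (posT v0) => //. Qed.

Let diffs s t : 0 <= s -> s <= t ->
  [/\ S t - S s = Rintegral mu `]s, t] fS /\ mu.-integrable `]s, t] (EFin \o fS),
      E t - E s = Rintegral mu `]s, t] fE /\ mu.-integrable `]s, t] (EFin \o fE) &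
      I t - I s = Rintegral mu `]s, t] fI /\ mu.-integrable `]s, t] (EFin \o fI)].
Proof.
move=> s0 st; have t0 : 0 <= t by exact: le_trans st.
have [i1 e1] := solS t0; have [i2 e2] := solS s0.
have [i3 e3] := solE t0; have [i4 e4] := solE s0.
have [i5 e5] := solI t0; have [i6 e6] := solI s0.
split; [exact: (Rint_diff s0 st i1 e1 e2)|exact: (Rint_diff s0 st i3 e3 e4)|
  exact: (Rint_diff s0 st i5 e5 e6)].
Qed.

Lemma Ndiff s t m : 0 <= s -> s <= t -> 0 <= m ->
  (forall u, s < u -> u <= t -> m <= I u) ->
  gnom * m * (t - s) <= (S s + E s + I s) - (S t + E t + I t).
Proof.
move=> s0 st m0 hI.
have [[dS iS] [dE iE] [dI iI]] := diffs s0 st.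
have [iSE eSE] := intD_oc iS iE.
have [iSEI eSEI] := intD_oc iSE iI.
have : Rintegral mu `]s, t] (fun x => fS x + fE x + fI x) <= - (gnom * m) * (t - s).
  apply: Rint_ub => // u su ut.
  have u0 : 0 <= u by lra.
  have [_ /andP[g1 g2]] := hbg u0.
  have -> : fS u + fE u + fI u = - (gamma u * I u) by rewrite /fS /fE /fI; ring.
  rewrite lerN2; apply: ler_pM => //; first lrah.
  exact: hI.
have -> : Rintegral mu `]s, t] (fun x => fS x + fE x + fI x) =
  Rintegral mu `]s, t] fS + Rintegral mu `]s, t] fE + Rintegral mu `]s, t] fI.
  by rewrite eSEI eSE.
lra.
Qed.

Lemma SEdiff s t m : 0 <= s -> s <= t -> 0 <= m ->
  (forall u, s < u -> u <= t -> m <= E u) ->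
  eta * m * (t - s) <= (S s + E s) - (S t + E t).
Proof.
move=> s0 st m0 hE.
have [[dS iS] [dE iE] _] := diffs s0 st.
have [iSE eSE] := intD_oc iS iE.
have : Rintegral mu `]s, t] (fun x => fS x + fE x) <= - (eta * m) * (t - s).
  apply: Rint_ub => // u su ut.
  have -> : fS u + fE u = - (eta * E u) by rewrite /fS /fE; ring.
  rewrite lerN2; apply: ler_wpM2l; first lrah.
  exact: hE.
rewrite eSE; lra.
Qed.

Lemma in01 t : 0 <= t -> [/\ 0 <= S t <= 1, 0 <= E t <= 1 & 0 <= I t <= 1].
Proof.
move=> t0.
have [p1 [p2 p3]] := pos_all t0.
have := Ndiff (lexx 0) t0 (lexx 0) (fun u u0 _ => proj2 (proj2 (pos_all (ltW u0)))).
rewrite S00 E00 I00 mulr0 mul0r.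
case: hPi => _ _ _ h.
move=> h2.
have -> : (S t <= 1) = true by apply/idP; lra.
have -> : (E t <= 1) = true by apply/idP; lra.
have -> : (I t <= 1) = true by apply/idP; lra.
by rewrite p1 p2 p3.
Qed.

Lemma cvgI : I t @[t --> +oo] --> (0 : R).
Proof.
apply: (@barbalat I (fun x => S x + E x + I x) (eta + gmax) gnom) => //.
- lrah.
- move=> t t0; have [p1 [p2 p3]] := pos_all t0; lra.
- by move=> t t0; have [_ [_ p3]] := pos_all t0.
- move=> s t s0 st; apply: (lip_gen solI) => // u su ut.
  have u0 : 0 <= u by lra.
  have [_ /andP[g1 g2]] := hbg u0.
  have [/andP[_ _] /andP[e1 e2] /andP[i1 i2]] := in01 u0.
  rewrite /fI; apply: (le_trans (ler_normB _ _)).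
  rewrite !normrM (gtr0_norm eta0) (ger0_norm e1) (ger0_norm i1).
  rewrite ger0_norm; last lrah.
  have : eta * E u <= eta by rewrite -[leRHS]mulr1 ler_wpM2l //; lrah.
  have : gamma u * I u <= gmax by rewrite -[leRHS]mulr1; apply: ler_pM => //; lrah.
  lra.
- move=> s t m s0 st m0 h; exact: Ndiff.
Qed.

Lemma cvgE : E t @[t --> +oo] --> (0 : R).
Proof.
apply: (@barbalat E (fun x => S x + E x) (bnom + eta) eta) => //.
- lrah.
- move=> t t0; have [p1 [p2 p3]] := pos_all t0; lra.
- by move=> t t0; have [_ [p2 _]] := pos_all t0.
- move=> s t s0 st; apply: (lip_gen solE) => // u su ut.
  have u0 : 0 <= u by lra.
  have [/andP[b1 b2] _] := hbg u0.
  have [/andP[s1 s2] /andP[e1 e2] /andP[i1 i2]] := in01 u0.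
  rewrite /fE; apply: (le_trans (ler_normB _ _)).
  have : `|beta u * S u * I u| <= bnom * 1 * 1.
    apply: prod3; rewrite ger0_norm //; lrah.
  rewrite !mulr1 [`|eta * _|]normrM (gtr0_norm eta0) (ger0_norm e1).
  have : eta * E u <= eta by rewrite -[leRHS]mulr1 ler_wpM2l //; lrah.
  lra.
- move=> s t m s0 st m0 h; exact: SEdiff.
Qed.

End Main.
End H.

Theorem lemma1 (R : realType) (eta bmin bnom gnom gmax Imax : R) :
  0 < eta -> 0 < bmin -> bmin <= bnom -> 0 < gnom -> gnom <= gmax ->
  0 < Imax -> Imax < 1 ->
  (* (1) *)
  (forall S0 E0 I0 : R, inPi S0 E0 I0 ->
   forall beta gamma : R -> R, admissible_control bmin bnom gnom gmax beta gamma ->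
   forall S E I : R -> R, seir_solution eta beta gamma S0 E0 I0 S E I ->
     [/\ E t @[t --> +oo] --> (0 : R),
         I t @[t --> +oo] --> (0 : R) &
         S t + (1 - S t - E t - I t) @[t --> +oo] --> (1 : R)]) /\
  (* (2) *)
  (forall S0 E0 I0 : R, in_A eta bmin bnom gnom gmax Imax S0 E0 I0 ->
   exists beta gamma : R -> R, admissible_control bmin bnom gnom gmax beta gamma /\
   forall S E I : R -> R, seir_solution eta beta gamma S0 E0 I0 S E I ->
     [/\ E t @[t --> +oo] --> (0 : R),
         I t @[t --> +oo] --> (0 : R) &
         forall t, 0 <= t -> I t <= Imax]) /\
  (* (3) *)
  (forall S0 E0 I0 : R, in_M eta bmin bnom gnom gmax Imax S0 E0 I0 ->
   forall beta gamma : R -> R, admissible_control bmin bnom gnom gmax beta gamma ->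
   forall S E I : R -> R, seir_solution eta beta gamma S0 E0 I0 S E I ->
     [/\ E t @[t --> +oo] --> (0 : R),
         I t @[t --> +oo] --> (0 : R) &
         forall t, 0 <= t -> I t <= Imax]).
Proof.
move=> eta0 bmin0 bminnom gnom0 gnommax Imax0 Imax1.
have P1 : forall S0 E0 I0 : R, inPi S0 E0 I0 ->
   forall beta gamma : R -> R, admissible_control bmin bnom gnom gmax beta gamma ->
   forall S E I : R -> R, seir_solution eta beta gamma S0 E0 I0 S E I ->
     [/\ E t @[t --> +oo] --> (0 : R),
         I t @[t --> +oo] --> (0 : R) &
         S t + (1 - S t - E t - I t) @[t --> +oo] --> (1 : R)].
  move=> S0 E0 I0 hPi beta gamma [_ _ _ hbg] S E I sol.
  have hE := cvgE eta0 bmin0 bminnom gnom0 gnommax hbg hPi sol.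
  have hI := cvgI eta0 bmin0 bminnom gnom0 gnommax hbg hPi sol.
  split => //.
  have h : ((fun=> (1:R)) - E - I) t @[t --> +oo] --> (1 - 0 - 0 : R).
    apply: cvgB => //; apply: cvgB => //; exact: cvg_cst.
  rewrite !subr0 in h.
  rewrite (_ : (fun t => S t + (1 - S t - E t - I t)) = ((fun _ => (1:R)) - E - I)) //.
  apply: funext => t; rewrite !fctE; ring.
split; first exact: P1.
split.
  move=> S0 E0 I0 [[hPi _] [beta [gamma [adm inv]]]].
  exists beta, gamma; split => // S E I sol.
  have [h1 h2 _] := P1 S0 E0 I0 hPi beta gamma adm S E I sol.
  by split => // t t0; have [_ ->] := inv S E I sol t t0.
move=> S0 E0 I0 [[hPi _] inv] beta gamma adm S E I sol.
have [h1 h2 _] := P1 S0 E0 I0 hPi beta gamma adm S E I sol.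
by split => // t t0; have [_ ->] := inv beta gamma adm S E I sol t t0.
Qed.
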